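(* Let $D$ be a directed acyclic graph with exactly one source $\rho$, and let $e$ be the eccentricity of $\rho$. Then for every $i\in\{1,\ldots,e\}$ there is a node of $D$ with eccentricity $i$.
   Context: The eccentricity of a node $v$ of a digraph is the maximum, over all nodes $w$ reachable from $v$ by a directed path, of the directed distance from $v$ to $w$ (only reachable nodes are considered, so it is always finite). *)

(* Defs.v *)
(* A finite digraph is a finType T with edge relation e : rel T
   (e x y means there is an arc x -> y). *)
From mathcomp Require Import all_boot.
Set Implicit Arguments. Unset Strict Implicit. Unset Printing Implicit Defensive.

Definition walk_len (T : finType) (e : rel T) (v w : T) (n : nat) : Prop :=
  exists p : seq T, [/\ size p = n, path e v p & last v p = w].

Definition is_dist (T : finType) (e : rel T) (v w : T) (d : nat) : Prop :=
  walk_len e v w d /\ (forall d', walk_len e v w d' -> d <= d').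

Definition is_ecc (T : finType) (e : rel T) (v : T) (k : nat) : Prop :=
  (exists w, is_dist e v w k) /\ (forall w d, is_dist e v w d -> d <= k).

Definition acyclic (T : finType) (e : rel T) : Prop :=
  forall x y, e x y -> ~~ connect e y x.

Definition is_source (T : finType) (e : rel T) (x : T) : Prop :=
  forall y, ~~ e y x.

(* Main.v *)
From Stdlib Require Import Classical.
Require Import Defs.
From mathcomp Require Import all_boot.
From mathcomp Require Import zify.

Set Implicit Arguments. Unset Strict Implicit. Unset Printing Implicit Defensive.

Lemma min_ex (P : nat -> Prop) : (exists n, P n) -> exists m, P m /\ forall k, P k -> m <= k.
Proof.
case=> n; elim: n {-2}n (leqnn n) => [|n IH] j Hj Pj.
  exists j; split=> // k _; by move: Hj; rewrite leqn0 => /eqP ->.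
case: (classic (exists k, k < j /\ P k)) => [[k [Hk Pk]]|H].
  apply: (IH k) => //; exact: leq_trans Hk Hj.
exists j; split=> // k Pk; rewrite leqNgt; apply/negP => Hk; apply: H; by exists k.
Qed.

Lemma max_ex (P : nat -> Prop) B : (exists n, P n) -> (forall n, P n -> n <= B) ->
  exists m, P m /\ forall k, P k -> k <= m.
Proof.
move=> Hex; elim: B => [|B IH] HB.
  case: Hex => n Pn; exists n; split=> // k Pk.
  by have := HB _ Pk; rewrite leqn0 => /eqP ->.
case: (classic (P B.+1)) => [PB|NPB].
  by exists B.+1; split=> // k /HB.
apply: IH => n Pn; have := HB _ Pn; rewrite leq_eqVlt => /orP [/eqP E|//].
by subst n.
Qed.

Section G.
Variables (T : finType) (e : rel T).

Lemma walk_connect v w n : walk_len e v w n -> connect e v w.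
Proof. case=> p [_ Hp Hl]; apply/connectP; by exists p. Qed.

Lemma dist_ex v w : connect e v w -> exists d, is_dist e v w d.
Proof.
move=> /connectP [p Hp Hl].
have [m [Hm Hmin]] := @min_ex (walk_len e v w) (ex_intro _ (size p) (ex_intro _ p (And3 erefl Hp (esym Hl)))).
by exists m.
Qed.

Lemma dist_bound v w d : is_dist e v w d -> d < #|T|.
Proof.
case=> [[p [_ Hp Hl]] Hmin].
case: (shortenP Hp) Hl => p' Hp' Hu _ Hl'.
have : d <= size p'.
  apply: Hmin; exists p'; split=> //.
move=> H; apply: (leq_ltn_trans H).
have := card_uniqP Hu; rewrite /= => Hc.
by rewrite -ltnS -[(size p').+1]Hc; apply: max_card.
Qed.

Lemma ecc_ex v : exists k, is_ecc e v k.
Proof.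
have H0 : exists n, exists w, is_dist e v w n.
  exists 0, v; split; last by move=> d _.
  by exists [::].
have HB : forall n, (exists w, is_dist e v w n) -> n <= #|T|.
  by move=> n [w H]; apply: ltnW; apply: (dist_bound H).
have [m [[w Hw] Hmax]] := max_ex H0 HB.
exists m; split; first by exists w.
move=> w' d Hd; apply: Hmax; by exists w'.
Qed.

Lemma key u m : is_ecc e u m -> 0 < m ->
  exists v, e u v /\ forall m', is_ecc e v m' -> m.-1 <= m'.
Proof.
case=> [[w [[p [Hs Hp Hl]] Hmin]] _] Hm.
case: p Hs Hp Hl => [|v p] /=; first by move=> Hs; rewrite -Hs in Hm.
move=> Hs /andP [Huv Hp] Hl.
exists v; split=> // m' [_ Hmax].
have Hw : walk_len e v w (size p) by exists p.
have [d [[q [Hq1 Hq2 Hq3]] Hdmin]] := dist_ex (walk_connect Hw).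
have : m <= d.+1.
  apply: Hmin; exists (v :: q); split=> //=; first by rewrite Hq1.
  by rewrite Huv Hq2.
move=> H1; have := Hmax w d (conj (ex_intro _ q (And3 Hq1 Hq2 Hq3)) Hdmin).
move=> H2; rewrite -ltnS (leq_trans _ (leq_trans H1 _)) //; first by case: (m) Hm.
Qed.

End G.

Theorem mainTheorem4 (T : finType) (e : rel T) (rho : T) (k : nat) :
  acyclic e ->
  (forall x, is_source e x <-> x = rho) ->
  is_ecc e rho k ->
  forall i, 1 <= i <= k -> exists v : T, is_ecc e v i.
Proof.
move=> Hac _ Hk i /andP [Hi1 Hik].
pose S u := exists m, is_ecc e u m /\ i <= m.
have [n [[u [[m [Hum Him]] Hn]] Hnmin]] :=
  @min_ex (fun n => exists u, S u /\ #|[set x | connect e u x]| = n)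
  (ex_intro _ _ (ex_intro _ rho (conj (ex_intro _ k (conj Hk Hik)) erefl))).
have [v [Huv Hv]] := key Hum (leq_trans Hi1 Him).
have [m' Hm'] := ecc_ex e v.
have Hmm' := Hv _ Hm'.
case: (leqP i m') => Him'.
  have : n <= #|[set x | connect e v x]|.
    apply: Hnmin; exists v; split=> //; by exists m'.
  rewrite -Hn => Hle.
  have : #|[set x | connect e v x]| < #|[set x | connect e u x]|.
    apply: proper_card; apply/properP; split.
      apply/subsetP => x; rewrite !inE => Hx.
      by apply: connect_trans (connect1 Huv) Hx.
    exists u; rewrite !inE ?connect0 //.
    exact: Hac.
  by rewrite ltnNge Hle.
exists u; have -> : i = m; last by [].
move: Hmm' Him Him' Hi1; case: (m) => [|mm] /= A B C D; lia.
Qed.
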